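(* Let $\mathcal{H}$ be a finite set of hypotheses and $\mathcal{R}$ a finite collection of decision regions $r\subseteq\mathcal{H}$. Let $k_{\mathrm{iff}}$ be the largest cardinality of a set $R\subseteq\mathcal{R}$ such that for every $r\in R$ there is a hypothesis $h$ with $h\notin r$ and $h\in r'$ for all $r'\in R\setminus\{r\}$. Let $k_{\mathrm{as}}=m+1$, where $m$ is the largest cardinality of a set $R\subseteq\mathcal{R}$ such that (1) some hypothesis $\tilde h$ lies in every region of $R$, and (2) for every $r\in R$ there is a hypothesis $h$ with $h\notin r$ and $h\in r'$ for all $r'\in R\setminus\{r\}$. Then $k_{\mathrm{as}}\ge k_{\mathrm{iff}}$. *)

(* Defs.v *)
From mathcomp Require Import all_boot.
Set Implicit Arguments. Unset Strict Implicit. Unset Printing Implicit Defensive.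

Definition separated (H : finType) (R : {set {set H}}) : bool :=
  [forall r in R, exists h : H,
      (h \notin r) && [forall r' in R :\ r, h \in r']].

Definition common_point (H : finType) (R : {set {set H}}) : bool :=
  [exists ht : H, forall r in R, ht \in r].

Definition k_iff (H : finType) (calR : {set {set H}}) : nat :=
  \max_(R in powerset calR | separated R) #|R|.

Definition m_as (H : finType) (calR : {set {set H}}) : nat :=
  \max_(R in powerset calR | common_point R && separated R) #|R|.

Definition k_as (H : finType) (calR : {set {set H}}) : nat := (m_as calR).+1.

(* Main.v *)
Require Import Defs.
From mathcomp Require Import all_boot.

Theorem proposition2 (H : finType) (calR : {set {set H}}) :
  k_iff calR <= k_as calR.
Proof.
rewrite /k_iff /k_as.
apply/bigmax_leqP => R; rewrite inE => /andP [sub sep].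
have [R0|[r0 r0R]] := set_0Vmem R; first by rewrite R0 cards0.
rewrite (cardsD1 r0 R) r0R add1n ltnS.
have sep' := sep.
move/forallP: sep' => /(_ r0); rewrite r0R /= => /existsP [h /andP [_ /forallP hall]].
apply: (@leq_bigmax_cond _ _ _ (R :\ r0)).
rewrite inE; apply/andP; split.
  by apply: subset_trans sub; apply: subsetDl.
apply/andP; split.
  apply/existsP; exists h; apply/forallP => r; apply/implyP => rR.
  by have := hall r; rewrite rR.
apply/forallP => r; apply/implyP => rR.
have rR0 : r \in R by move: rR; rewrite in_setD1 => /andP [].
move/forallP: sep => /(_ r); rewrite rR0 /= => /existsP [h' /andP [h'r /forallP h'all]].
apply/existsP; exists h'; rewrite h'r /=; apply/forallP => r'; apply/implyP => r'R.
have r'R' : r' \in R :\ r.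
  by move: r'R; rewrite !in_setD1 => /and3P [-> _ ->].
exact: (implyP (h'all r') r'R').
Qed.
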